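(* The polyhedron $$\mathcal{P}^{\text{odd-cover-dir}}:=\Big\{x\in\mathbb{R}^{E}_+ : \sum_{e\in P}x_e\ge 1 \text{ for every } s\rightarrow t \text{ odd-path } P \text{ in } D\Big\}$$ is not necessarily half-integral for directed acyclic graphs $D=(V,E)$ with distinct nodes $s,t\in V$. That is, there exist a DAG $D$ and nodes $s,t$ for which $\mathcal{P}^{\text{odd-cover-dir}}$ has an extreme point with some coordinate that is not an integer multiple of $1/2$.
   Context: Paths are simple directed paths. An odd-path is a path with an odd number of edges. A polyhedron is half-integral if every coordinate of each of its extreme points is an integer multiple of $1/2$. *)

(* Defs.v *)
From mathcomp Require Import all_boot.
From Stdlib Require Import Reals ZArith.

Set Implicit Arguments.
Unset Strict Implicit.
Unset Printing Implicit Defensive.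

Definition simple_digraph (V E : finType) (src tgt : E -> V) : Prop :=
  forall e f : E, src e = src f -> tgt e = tgt f -> e = f.

Fixpoint consecutive (V E : finType) (src tgt : E -> V) (p : seq E) : bool :=
  match p with
  | e :: ((f :: _) as q) => (tgt e == src f) && consecutive src tgt q
  | _ => true
  end.

Definition walk (V E : finType) (src tgt : E -> V) (u v : V) (p : seq E)
  : Prop :=
  match p with
  | [::] => u = v
  | e :: _ => [/\ src e = u, tgt (last e p) = v & consecutive src tgt p]
  end.

Definition acyclic (V E : finType) (src tgt : E -> V) : Prop :=
  forall (u : V) (p : seq E), p <> [::] -> ~ walk src tgt u u p.

Definition dpath (V E : finType) (src tgt : E -> V) (s t : V) (p : seq E)
  : Prop :=
  walk src tgt s t p /\ uniq (s :: map tgt p).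

Definition odd_path (V E : finType) (src tgt : E -> V) (s t : V) (p : seq E)
  : Prop :=
  dpath src tgt s t p /\ odd (size p).

Definition path_sum (E : finType) (x : E -> R) (p : seq E) : R :=
  foldr (fun e acc => (x e + acc)%R) 0%R p.

Definition in_odd_cover_dir (V E : finType) (src tgt : E -> V) (s t : V)
  (x : E -> R) : Prop :=
  (forall e, (0 <= x e)%R) /\
  (forall p, odd_path src tgt s t p -> (1 <= path_sum x p)%R).

Definition extreme_point (V E : finType) (src tgt : E -> V) (s t : V)
  (x : E -> R) : Prop :=
  in_odd_cover_dir src tgt s t x /\
  forall (y z : E -> R) (l : R),
    in_odd_cover_dir src tgt s t y -> in_odd_cover_dir src tgt s t z ->
    (0 < l < 1)%R -> (forall e, x e = l * y e + (1 - l) * z e)%R ->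
    forall e, y e = z e.

Definition half_integer (r : R) : Prop :=
  exists k : Z, r = (IZR k * / 2)%R.

(* Main.v *)
Require Import Defs.
From mathcomp Require Import all_boot.
From Stdlib Require Import Reals ZArith Lra Lia.

Set Implicit Arguments.
Unset Strict Implicit.
Unset Printing Implicit Defensive.

Definition srcn (k : nat) : nat :=
  nth 0 [:: 0; 4; 7; 11; 2; 3; 5; 6; 8; 9; 2; 0; 1; 5; 0; 8; 10] k.
Definition tgtn (k : nat) : nat :=
  nth 0 [:: 2; 5; 8; 12; 3; 4; 6; 7; 9; 12; 11; 1; 4; 11; 7; 10; 11] k.
Definition xn (k : nat) : nat := nth 0 [:: 1; 1; 1; 2] k.

Definition VV := 'I_13.
Definition EE := 'I_17.
Lemma srcn_lt k : srcn k < 13.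
Proof.
rewrite /srcn; case: (ltnP k 17) => H; last by rewrite nth_default.
have : all (fun x => x < 13) [:: 0; 4; 7; 11; 2; 3; 5; 6; 8; 9; 2; 0; 1; 5; 0; 8; 10] by [].
move/allP; apply; exact: mem_nth.
Qed.
Lemma tgtn_lt k : tgtn k < 13.
Proof.
rewrite /tgtn; case: (ltnP k 17) => H; last by rewrite nth_default.
have : all (fun x => x < 13) [:: 2; 5; 8; 12; 3; 4; 6; 7; 9; 12; 11; 1; 4; 11; 7; 10; 11] by [].
move/allP; apply; exact: mem_nth.
Qed.
Definition srcE (e : EE) : VV := Ordinal (srcn_lt e).
Definition tgtE (e : EE) : VV := Ordinal (tgtn_lt e).
Definition mkE (k : nat) : EE := Ordinal (ltn_pmod k (isT : 0 < 17)).
Definition edges : seq EE := map mkE (iota 0 17).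
Lemma mkE_val (e : EE) : mkE e = e.
Proof. apply: val_inj => /=. apply: modn_small. exact: ltn_ord. Qed.
Lemma all_edges (P : pred EE) : all P edges -> forall e, P e.
Proof.
move=> /allP H e. apply: H. rewrite -(mkE_val e). apply: map_f.
rewrite mem_iota /=. exact: ltn_ord.
Qed.
Definition sV : VV := @Ordinal 13 0 isT.
Definition tV : VV := @Ordinal 13 12 isT.
Definition xE (e : EE) : R := (INR (xn e) / 3)%R.

Lemma src_lt_tgt_b : all (fun e : EE => (srcE e : nat) < tgtE e) edges.
Proof. by vm_compute. Qed.

Lemma src_lt_tgt (e : EE) : (srcE e : nat) < tgtE e.
Proof. exact: (all_edges src_lt_tgt_b e). Qed.

Lemma consec_lt (p : seq EE) (e : EE) :
  consecutive srcE tgtE (e :: p) -> (srcE e : nat) < tgtE (last e p).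
Proof.
elim: p e => [|f p IH] e /=; first by move=> _; exact: src_lt_tgt.
move=> /andP [/eqP H1 H2].
apply: ltn_trans (src_lt_tgt e) _. rewrite H1. exact: IH.
Qed.

Lemma acyc : acyclic srcE tgtE.
Proof.
move=> u [|e p] // _ [H1 H2 H3].
have := consec_lt H3. by rewrite H1 H2 ltnn.
Qed.

Lemma simple_b : all (fun e : EE => all (fun f : EE =>
  (srcE e == srcE f) && (tgtE e == tgtE f) ==> (e == f)) edges) edges.
Proof. by vm_compute. Qed.

Lemma simp : simple_digraph srcE tgtE.
Proof.
move=> e f H1 H2.
have := all_edges (all_edges simple_b e) f.
by rewrite /= H1 H2 !eqxx /= => /eqP.
Qed.

Lemma walk_cons (u v : VV) (e : EE) (q : seq EE) :
  walk srcE tgtE u v (e :: q) -> srcE e = u /\ walk srcE tgtE (tgtE e) v q.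
Proof.
case: q => [|f q] [H1 H2 H3] /=; split => //.
move: H3 => /= /andP [/eqP H4 H5]. by split.
Qed.

Fixpoint Wf (k : nat) (u : VV) : seq (seq EE) :=
  (if u == tV then [:: [::]] else [::]) ++
  match k with
  | 0 => [::]
  | k'.+1 => flatten [seq [seq e :: q | q <- Wf k' (tgtE e)]
                     | e <- edges & srcE e == u]
  end.

Definition W := Wf 13.

Lemma W_closed_b : all (fun e : EE => all (fun q => (e :: q) \in W (srcE e)) (W (tgtE e))) edges.
Proof. by vm_compute. Qed.

Lemma W_t : [::] \in W tV.
Proof. by vm_compute. Qed.

Lemma walk_W (p : seq EE) (u : VV) : walk srcE tgtE u tV p -> p \in W u.
Proof.
elim: p u => [|e q IH] u.
  by move=> /= ->; exact: W_t.
move=> /walk_cons [H1 H2].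
have Hq := IH _ H2.
have := allP (all_edges W_closed_b e) q Hq. by rewrite H1.
Qed.

Lemma W_odd_b : all (fun p => odd (size p) ==> (3 <= sumn (map (fun e : EE => xn e) p))) (W sV).
Proof. by vm_compute. Qed.

Lemma path_sum_x (p : seq EE) :
  path_sum xE p = (INR (sumn (map (fun e : EE => xn e) p)) / 3)%R.
Proof.
elim: p => [|e p IH] /=; first by rewrite /=; field.
rewrite IH plus_INR /xE. field.
Qed.

Lemma x_in : in_odd_cover_dir srcE tgtE sV tV xE.
Proof.
split.
  move=> e; rewrite /xE. apply: Rmult_le_pos; [exact: pos_INR | lra].
move=> p [[Hw _] Ho].
have Hp := walk_W Hw.
have := allP W_odd_b p Hp. rewrite Ho /= => H3.
rewrite path_sum_x.
have : (INR 3 <= INR (sumn (map (fun e : EE => xn e) p)))%R.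
  apply: le_INR. by apply/leP.
simpl INR. lra.
Qed.

Notation "'e_' k" := (@Ordinal 17 k isT) (at level 0, k at level 0).

Definition Pabc : seq EE := [:: e_ 0; e_ 4; e_ 5; e_ 1; e_ 6; e_ 7; e_ 2; e_ 8; e_ 9].
Definition Pad : seq EE := [:: e_ 0; e_ 10; e_ 3].
Definition Pbd : seq EE := [:: e_ 11; e_ 12; e_ 1; e_ 13; e_ 3].
Definition Pcd : seq EE := [:: e_ 14; e_ 2; e_ 15; e_ 16; e_ 3].

Definition walkb (u v : VV) (p : seq EE) : bool :=
  match p with
  | [::] => u == v
  | e :: _ => [&& srcE e == u, tgtE (last e p) == v & consecutive srcE tgtE p]
  end.

Lemma odd_pathP (p : seq EE) :
  walkb sV tV p && uniq (sV :: map tgtE p) && odd (size p) ->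
  odd_path srcE tgtE sV tV p.
Proof.
case: p => [|e p] /=; first by [].
move=> /andP [/andP [/and3P [/eqP H1 /eqP H2 H3] H4] H5].
split => //; split => //.
Qed.

Lemma opabc : odd_path srcE tgtE sV tV Pabc.
Proof. apply: odd_pathP. by vm_compute. Qed.
Lemma opad : odd_path srcE tgtE sV tV Pad.
Proof. apply: odd_pathP. by vm_compute. Qed.
Lemma opbd : odd_path srcE tgtE sV tV Pbd.
Proof. apply: odd_pathP. by vm_compute. Qed.
Lemma opcd : odd_path srcE tgtE sV tV Pcd.
Proof. apply: odd_pathP. by vm_compute. Qed.

Lemma path_sum_comb (y z : EE -> R) (l : R) (p : seq EE) :
  (forall e, xE e = l * y e + (1 - l) * z e)%R ->
  path_sum xE p = (l * path_sum y p + (1 - l) * path_sum z p)%R.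
Proof.
move=> Hx. elim: p => [|e p IH] /=; first ring.
rewrite IH Hx. ring.
Qed.

Lemma xval (e : EE) (k : nat) : val e = k -> xE e = (INR (xn k) / 3)%R.
Proof. by rewrite /xE => ->. Qed.

Lemma determined (w : EE -> R) :
  (forall e, xE e = 0%R -> w e = 0%R) ->
  path_sum w Pabc = 1%R -> path_sum w Pad = 1%R ->
  path_sum w Pbd = 1%R -> path_sum w Pcd = 1%R ->
  forall e, w e = xE e.
Proof.
move=> Hz.
rewrite /Pabc /Pad /Pbd /Pcd /path_sum /=.
have Z : forall k (H : k < 17), 3 < k -> w (Ordinal H) = 0%R /\ xE (Ordinal H) = 0%R.
  move=> k H Hk.
  have Hx : xE (Ordinal H) = 0%R.
    rewrite /xE /= /xn nth_default; last by [].
    simpl INR. lra.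
  split => //. exact: Hz.
have [Z4 _] := Z 4 isT isT. have [Z5 _] := Z 5 isT isT.
have [Z6 _] := Z 6 isT isT. have [Z7 _] := Z 7 isT isT.
have [Z8 _] := Z 8 isT isT. have [Z9 _] := Z 9 isT isT.
have [Z10 _] := Z 10 isT isT. have [Z11 _] := Z 11 isT isT.
have [Z12 _] := Z 12 isT isT. have [Z13 _] := Z 13 isT isT.
have [Z14 _] := Z 14 isT isT. have [Z15 _] := Z 15 isT isT.
have [Z16 _] := Z 16 isT isT.
rewrite Z4 Z5 Z6 Z7 Z8 Z9 Z10 Z11 Z12 Z13 Z14 Z15 Z16 => H1 H2 H3 H4.
move=> [k Hk].
case: (ltnP 3 k) => Hk3.
  have [-> ->] := Z k Hk Hk3. by [].
have E : forall j (Hj : j < 17), k = j -> Ordinal Hk = Ordinal Hj.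
  by move=> j Hj Ej; apply: val_inj.
case: k Hk Hk3 E => [|[|[|[|k]]]] Hk Hk3 E //.
- rewrite (E 0 isT erefl) /xE /=. lra.
- rewrite (E 1 isT erefl) /xE /=. lra.
- rewrite (E 2 isT erefl) /xE /=. lra.
- rewrite (E 3 isT erefl) /xE /=. lra.
Qed.

Lemma tight (w : EE -> R) (p : seq EE) :
  in_odd_cover_dir srcE tgtE sV tV w -> odd_path srcE tgtE sV tV p ->
  path_sum w p = 1%R -> True.
Proof. by []. Qed.

Lemma x_extreme : extreme_point srcE tgtE sV tV xE.
Proof.
split; first exact: x_in.
move=> y z l Hy Hz Hl Hx.
have Hyz : forall p, odd_path srcE tgtE sV tV p -> path_sum xE p = 1%R ->
    path_sum y p = 1%R /\ path_sum z p = 1%R.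
  move=> p Hp Hp1.
  have H1 := proj2 Hy p Hp. have H2 := proj2 Hz p Hp.
  have := path_sum_comb p Hx. rewrite Hp1 => Hc.
  case: Hl => Hl0 Hl1.
  split; nra.
have X1 : forall p, p = Pabc \/ p = Pad \/ p = Pbd \/ p = Pcd -> path_sum xE p = 1%R.
  move=> p [->|[->|[->|->]]]; rewrite path_sum_x /=; lra.
have [Ya Za] := Hyz _ opabc (X1 _ (or_introl erefl)).
have [Yb Zb] := Hyz _ opad (X1 _ (or_intror (or_introl erefl))).
have [Yc Zc] := Hyz _ opbd (X1 _ (or_intror (or_intror (or_introl erefl)))).
have [Yd Zd] := Hyz _ opcd (X1 _ (or_intror (or_intror (or_intror erefl)))).
have Z0 : forall e, xE e = 0%R -> y e = 0%R /\ z e = 0%R.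
  move=> e He. have := Hx e. rewrite He.
  have := proj1 Hy e. have := proj1 Hz e. case: Hl => Hl0 Hl1.
  move=> h1 h2 h3. split; nra.
have Dy := determined (fun e h => proj1 (Z0 e h)) Ya Yb Yc Yd.
have Dz := determined (fun e h => proj2 (Z0 e h)) Za Zb Zc Zd.
move=> e. by rewrite Dy Dz.
Qed.

Theorem theorem3 :
  exists (V E : finType) (src tgt : E -> V) (s t : V),
    simple_digraph src tgt /\ acyclic src tgt /\ s <> t /\
    exists x : E -> R,
      extreme_point src tgt s t x /\ exists e : E, ~ half_integer (x e).
Proof.
exists VV, EE, srcE, tgtE, sV, tV.
split; first exact: simp.
split; first exact: acyc.
split; first by move=> H; have := congr1 val H.
exists xE. split; first exact: x_extreme.
exists (e_ 0). move=> [k Hk].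
rewrite /xE /= in Hk.
have H : IZR (k * 3) = IZR 2 by rewrite mult_IZR; lra.
apply eq_IZR in H. lia.
Qed.
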